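(* \textsc{SymISR} can be solved in $O(n)$ time for paths and cycles with $n$ vertices.
   Context: All graphs are finite, simple and undirected. Two independent sets $I,J$ of $G$ are adjacent if $G[I\triangle J]$ is connected. A reconfiguration sequence from $I_s$ to $I_t$ of length $\ell$ is a sequence $\langle I_s=I_0,\dots,I_\ell=I_t\rangle$ of independent sets of $G$ with $G[I_{i-1}\triangle I_i]$ connected for every $i\in\{1,\dots,\ell\}$. \textsc{SymISR}: given $G$, independent sets $I_s,I_t$, and an integer $k$, decide whether there is a reconfiguration sequence from $I_s$ to $I_t$ of length at most $k$. *)

(* Defs.v *)
From mathcomp Require Import all_boot.
Set Implicit Arguments. Unset Strict Implicit. Unset Printing Implicit Defensive.

Definition is_path_graph (n : nat) (e : rel 'I_n) : Prop :=
  exists f : 'I_n -> 'I_n, injective f /\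
    forall u v, e u v = ((f u).+1 == f v) || ((f v).+1 == f u).

Definition is_cycle_graph (n : nat) (e : rel 'I_n) : Prop :=
  3 <= n /\ exists f : 'I_n -> 'I_n, injective f /\
    forall u v, e u v = ((f u).+1 %% n == f v) || ((f v).+1 %% n == f u).

Definition independent (T : finType) (e : rel T) (I : {set T}) : bool :=
  [forall x in I, forall y in I, ~~ e x y].

Definition induced_connected (T : finType) (e : rel T) (S : {set T}) : bool :=
  [forall x in S, forall y in S,
     connect (fun a b => [&& e a b, a \in S & b \in S]) x y].

Definition is_adjacent (T : finType) (e : rel T) (I J : {set T}) : bool :=
  induced_connected e ((I :\: J) :|: (J :\: I)).

(* <Is = I_0, I_1, ..., I_l = It> encoded as Is :: L, of length l = size L. *)
Definition reconf_seq (T : finType) (e : rel T) (Is It : {set T})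
    (L : seq {set T}) : bool :=
  [&& all (independent e) (Is :: L), path (is_adjacent e) Is L & last Is L == It].

Definition SymISR (T : finType) (e : rel T) (Is It : {set T}) (k : nat) : Prop :=
  exists L : seq {set T}, reconf_seq e Is It L /\ size L <= k.

Inductive instr : Type :=
| Cst    (d c : nat)
| Add    (d a b : nat)
| Sub    (d a b : nat)    (* M[d] := M[a] - M[b]  (truncated) *)
| Half   (d a : nat)
| LoadI  (d a : nat)
| StoreI (a s : nat)
| Jz     (a l : nat)
| Jmp    (l : nat)
| Halt.

Definition program := seq instr.
Record config := Config { pc : nat; mem : nat -> nat }.

Definition upd (m : nat -> nat) (a v : nat) : nat -> nat :=
  fun x => if x == a then v else m x.

Definition halted (P : program) (c : config) : bool :=
  match nth Halt P (pc c) with Halt => true | _ => false end.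

(* One step; a halted configuration (Halt, or pc outside the program) is fixed. *)
Definition step (P : program) (c : config) : config :=
  let m := mem c in let p := pc c in
  match nth Halt P p with
  | Cst d k => Config p.+1 (upd m d k)
  | Add d a b => Config p.+1 (upd m d (m a + m b))
  | Sub d a b => Config p.+1 (upd m d (m a - m b))
  | Half d a => Config p.+1 (upd m d (m a)./2)
  | LoadI d a => Config p.+1 (upd m d (m (m a)))
  | StoreI a s => Config p.+1 (upd m (m a) (m s))
  | Jz a l => Config (if m a == 0 then l else p.+1) m
  | Jmp l => Config l m
  | Halt => c
  end.

Definition exec (P : program) (t : nat) (c : config) : config := iter t (step P) c.

Definition decides_within (P : program) (m0 : nat -> nat) (t : nat) (Q : Prop) : Prop :=
  let c := exec P t (Config 0 m0) in halted P c /\ (mem c 0 != 0 <-> Q).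

(* Memory layout: M[0] = n, M[1] = m (number of edges), M[2] = k,
   M[3+2i], M[4+2i] = endpoints of the i-th edge of the list es,
   then n cells with the indicator of Is, then n cells with the indicator of It,
   all other cells 0. *)
Definition encode (n : nat) (es : seq ('I_n * 'I_n)) (Is It : {set 'I_n}) (k : nat)
    : nat -> nat :=
  fun a => nth 0 ([:: n; size es; k]
                  ++ flatten [seq [:: val p.1; val p.2] | p <- es]
                  ++ [seq nat_of_bool (v \in Is) | v <- enum 'I_n]
                  ++ [seq nat_of_bool (v \in It) | v <- enum 'I_n]) a.

Definition edge_list (n : nat) (e : rel 'I_n) (es : seq ('I_n * 'I_n)) : Prop :=
  all (fun p => e p.1 p.2) es /\
  forall u v, e u v -> count (fun p => (p == (u, v)) || (p == (v, u))) es = 1.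

(* Main.v *)
Require Import Defs.
From mathcomp Require Import all_boot zify.
From Stdlib Require Import FunctionalExtensionality.
Set Implicit Arguments. Unset Strict Implicit. Unset Printing Implicit Defensive.

Definition sd (T : finType) (A B : {set T}) := (A :\: B) :|: (B :\: A).
Lemma in_sd (T : finType) (A B : {set T}) x : (x \in sd A B) = ((x \in A) != (x \in B)).
Proof. rewrite !inE; by case: (x \in A); case: (x \in B). Qed.

Lemma sumb_card (T : finType) (b : pred T) : \sum_i (b i : nat) = #|b|.
Proof.
rewrite -sum1_card [RHS]big_mkcond /=; apply: eq_bigr => i _; rewrite unfold_in; by case: (b i).
Qed.

Lemma nxE n i : i < n -> i.+1 %% n = if i.+1 == n then 0 else i.+1.
Proof.
move=> H; case: eqP => [->|Hne]; first by rewrite modnn.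
by rewrite modn_small //; lia.
Qed.

Section Comb.
Variables (n : nat) (e : rel 'I_n) (f : 'I_n -> 'I_n) (cyc : bool).
Hypothesis Hf : injective f.
Definition nx (i : nat) := if cyc then i.+1 %% n else i.+1.
Hypothesis He : forall u v, e u v = (nx (f u) == f v) || (nx (f v) == f u).
Hypothesis Hn3 : cyc -> 3 <= n.

Lemma e_sym : symmetric e.
Proof. by move=> u v; rewrite !He orbC. Qed.

Definition succ (u : 'I_n) : option 'I_n := [pick v | nx (f u) == f v].

Lemma succP u v : (succ u == Some v) = (nx (f u) == f v).
Proof.
rewrite /succ; case: pickP => [w /eqP Hw | H]; last by rewrite H.
apply/eqP/eqP => [[<-] // | Hv]; congr Some; apply: Hf; apply: val_inj => /=.
by rewrite -Hw Hv.
Qed.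

Lemma succ_e u v : succ u = Some v -> e u v.
Proof. by move/eqP; rewrite succP He => ->. Qed.

Lemma e_succ u v : e u v -> succ u = Some v \/ succ v = Some u.
Proof. by rewrite He -!succP => /orP [] /eqP; [left|right]. Qed.

Lemma nx_inj i j : i < n -> j < n -> nx i = nx j -> i = j.
Proof.
move=> Hi Hj; rewrite /nx; case: cyc; last by case.
rewrite (nxE Hi) (nxE Hj).
by case: eqP; case: eqP; lia.
Qed.

Lemma succ_inj u1 u2 w : succ u1 = Some w -> succ u2 = Some w -> u1 = u2.
Proof.
move=> /eqP; rewrite succP => /eqP H1 /eqP; rewrite succP => /eqP H2.
apply: Hf; apply: val_inj; apply: nx_inj; [exact: ltn_ord | exact: ltn_ord | by rewrite H1 H2].
Qed.

Lemma succ_antisym a b : succ a = Some b -> succ b = Some a -> False.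
Proof.
move=> /eqP; rewrite succP => /eqP H1 /eqP; rewrite succP => /eqP H2.
move: H1 H2; rewrite /nx; case Hc: cyc.
  have := Hn3 Hc; have := ltn_ord (f a); have := ltn_ord (f b).
  rewrite (nxE (ltn_ord (f a))) (nxE (ltn_ord (f b))).
  by case: eqP; case: eqP; lia.
lia.
Qed.

Lemma succ_irr a : succ a = Some a -> False.
Proof.
move=> /eqP; rewrite succP => /eqP; rewrite /nx; case Hc: cyc.
  have := Hn3 Hc; have := ltn_ord (f a).
  rewrite (nxE (ltn_ord (f a))).
  by case: eqP; lia.
lia.
Qed.

Lemma succ_total : cyc -> forall u, exists v, succ u = Some v.
Proof.
move=> Hc u; have [g fK gK] := injF_bij Hf.
have Hlt : nx (f u) < n by rewrite /nx Hc ltn_pmod //; have := Hn3 Hc; lia.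
exists (g (Ordinal Hlt)); apply/eqP; rewrite succP gK //.
Qed.

Definition insucc (S : {set 'I_n}) u := if succ u is Some v then v \in S else false.
Definition phi (S : {set 'I_n}) := \sum_u ((u \in S) && ~~ insucc S u).
Definition cc (S : {set 'I_n}) := if S == set0 then 0 else maxn 1 (phi S).
Definition haspred v := [exists u, succ u == Some v].

Lemma sum_insucc S : \sum_u (insucc S u : nat) = \sum_v ((v \in S) && haspred v : nat).
Proof.
rewrite !sumb_card.
pose A := [set u | insucc S u].
pose sc u := odflt u (succ u).
transitivity #|A|; first by apply: eq_card => u; rewrite inE unfold_in.
transitivity #|sc @: A|; last first.
  apply: eq_card => v; rewrite [v \in sc @: A]unfold_in /=.
  apply/imsetP/andP.
    case=> u; rewrite inE /insucc /sc; case Hu: (succ u) => [w|] // Hw ->.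
    split => //; apply/existsP; exists u; by rewrite Hu.
  case=> Hv /existsP [u /eqP Hu]; exists u; last by rewrite /sc Hu.
  by rewrite inE /insucc Hu.
rewrite card_in_imset // => u1 u2; rewrite !inE /insucc /sc.
case H1: (succ u1) => [w1|] //; case H2: (succ u2) => [w2|] //= _ _ E.
by apply: succ_inj H1 _; rewrite H2 E.
Qed.

Definition beta (S : {set 'I_n}) := \sum_u ((u \in S) != insucc S u : nat) + \sum_u (~~ haspred u && (u \in S) : nat).

Lemma split_sum (T : finType) (x y : pred T) :
  \sum_u (x u : nat) = \sum_u (x u && y u : nat) + \sum_u (x u && ~~ y u : nat).
Proof. rewrite -big_split /=; apply: eq_bigr => u _; by case: (x u); case: (y u). Qed.

Lemma beta2 S : beta S = phi S + phi S.
Proof.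
rewrite /beta /phi.
have E1 : \sum_u ((u \in S) != insucc S u : nat) =
   \sum_u ((u \in S) && ~~ insucc S u : nat) + \sum_u (insucc S u && ~~ (u \in S) : nat).
  rewrite -big_split /=; apply: eq_bigr => u _; by case: (u \in S); case: (insucc S u).
have E2 := split_sum (fun u => insucc S u) (fun u => u \in S).
have E3 := split_sum (fun u => u \in S) (fun u => insucc S u).
have E4 := split_sum (fun u => u \in S) haspred.
have E5 := sum_insucc S.
have E6 : \sum_u (insucc S u && (u \in S) : nat) = \sum_u ((u \in S) && insucc S u : nat).
  by apply: eq_bigr => u _; rewrite andbC.
have E7 : \sum_u (~~ haspred u && (u \in S) : nat) = \sum_u ((u \in S) && ~~ haspred u : nat).
  by apply: eq_bigr => u _; rewrite andbC.
simpl in *; lia.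
Qed.

Lemma insucc_sd A B u : insucc (sd A B) u = insucc A u (+) insucc B u.
Proof. rewrite /insucc; case: (succ u) => [v|] //; rewrite in_sd; by case: (v \in A); case: (v \in B). Qed.

Lemma beta_sd A B : beta (sd A B) <= beta A + beta B.
Proof.
rewrite /beta.
suff [H1 H2] : \sum_u ((u \in sd A B) != insucc (sd A B) u : nat) <=
      \sum_u ((u \in A) != insucc A u : nat) + \sum_u ((u \in B) != insucc B u : nat) /\
    \sum_u (~~ haspred u && (u \in sd A B) : nat) <=
      \sum_u (~~ haspred u && (u \in A) : nat) + \sum_u (~~ haspred u && (u \in B) : nat) by lia.
split; rewrite -big_split /=; apply: leq_sum => u _; rewrite ?insucc_sd in_sd;
by case: (u \in A); case: (u \in B); case: (insucc A u); case: (insucc B u); case: (haspred u).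
Qed.

Lemma phi_sd A B : phi (sd A B) <= phi A + phi B.
Proof. have := beta_sd A B; rewrite !beta2; lia. Qed.

Definition RankOK (T : {set 'I_n}) (r : 'I_n -> nat) :=
  (forall w w', w \in T -> w' \in T -> succ w = Some w' -> r w' = (r w).+1) /\ {in T &, injective r}.

Lemma end_exists T r : RankOK T r -> T != set0 -> exists2 u, u \in T & ~~ insucc T u.
Proof.
move=> [Hr _] /set0Pn [x Hx].
case: (arg_maxnP r Hx) => u Hu Hmax; exists u => //.
rewrite /insucc; case Hs: (succ u) => [w|] //; apply/negP => Hw.
have := Hmax w Hw; rewrite (Hr u w Hu Hw Hs); lia.
Qed.

Definition eT (T : {set 'I_n}) := fun a b => [&& e a b, a \in T & b \in T].

Lemma reach_bound T r u1 : RankOK T r -> u1 \in T -> ~~ insucc T u1 ->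
  forall w, connect (eT T) u1 w -> r w <= r u1.
Proof.
move=> [Hr Hinj] H1 Hend w /connectP [p Hp ->].
have Gen : forall a, a \in T -> r a <= r u1 -> path (eT T) a p -> r (last a p) <= r u1.
  elim: p {Hp} => [|h p IH] a Ha Hra; first by [].
  rewrite /= => /andP [/and3P [Hah _ Hh] Hp].
  suff Hrh : r h <= r u1 by exact: IH h Hh Hrh Hp.
  case: (e_succ Hah) => Hs.
    have := Hr a h Ha Hh Hs.
    case: (ltngtP (r a) (r u1)) => [Hlt|Hgt|Heq]; try lia.
    have Eq := Hinj a u1 Ha H1 Heq; subst a.
    move: Hend; rewrite /insucc Hs Hh //.
  have := Hr h a Hh Ha Hs; lia.
exact: Gen H1 (leqnn _) Hp.
Qed.

Lemma rank_exists (T : {set 'I_n}) : (cyc -> exists2 w0, w0 \notin T & True) -> exists r, RankOK T r.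
Proof.
move=> H; case Hc: cyc in H *.
  case: (H erefl) => w0 Hw0 _.
  exists (fun w => if f w0 < f w then f w - (f w0).+1 else f w + n - (f w0).+1).
  have Hne : forall w, w \in T -> (f w : nat) != f w0.
    move=> w Hw; apply/eqP => E; have Ew : f w = f w0 by apply: val_inj.
    by move: (Hf Ew) Hw => ->; rewrite (negbTE Hw0).
  split.
    move=> w w' Hw Hw' /eqP; rewrite succP /nx Hc (nxE (ltn_ord (f w))) => /eqP E.
    have := Hne w Hw; have := Hne w' Hw'; have := ltn_ord (f w); have := ltn_ord (f w0).
    have := ltn_ord (f w').
    move: E; case: eqP => E1 E2; case: ifP => C1; case: ifP => C2; lia.
  move=> a b Ha Hb /= E; apply: Hf; apply: val_inj => /=; move: E.
  have := Hne a Ha; have := Hne b Hb; have := ltn_ord (f a); have := ltn_ord (f b);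
  have := ltn_ord (f w0).
  case: ifP; case: ifP; lia.
exists (fun w => val (f w)); split.
  by move=> w w' _ _ /eqP; rewrite succP /nx Hc => /eqP /= <-.
by move=> a b _ _ E; apply: Hf; apply: val_inj.
Qed.

Lemma phi_set0 : phi set0 = 0.
Proof. by rewrite /phi big1 // => u _; rewrite inE. Qed.

Lemma phi_pos (T : {set 'I_n}) : T != set0 -> (exists2 w0, w0 \notin T & True) -> 0 < phi T.
Proof.
move=> HT Hw.
have [r Hr] := rank_exists (fun _ => Hw).
have [u Hu Hend] := end_exists Hr HT.
rewrite /phi (bigD1 u) //= Hu Hend; lia.
Qed.

Lemma phi_conn (T : {set 'I_n}) : induced_connected e T -> phi T <= 1.
Proof.
move=> Hc; rewrite leqNgt; apply/negP => Hgt.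
have Hcard : 1 < #|[pred u | (u \in T) && ~~ insucc T u]| by rewrite -sumb_card.
case/card_gt1P: Hcard => u1 [u2 [/andP [H1 E1] /andP [H2 E2] Hne]].
have Hw : cyc -> exists2 w0, w0 \notin T & True.
  move=> Hcy; case: (boolP [exists w0, w0 \notin T]) => [/existsP [w0 Hw0]|Hno]; first by exists w0.
  exfalso; move: E1; rewrite /insucc; case: (succ_total Hcy u1) => v ->.
  apply/negP/negPn. by move: Hno; rewrite negb_exists => /forallP /(_ v); rewrite negbK.
have [r [Hr Hinj]] := rank_exists Hw.
have Hrne : r u1 != r u2 by apply/eqP => E; move/eqP: Hne; apply; apply: Hinj.
move/forallP: Hc => Hc.
case: (ltngtP (r u1) (r u2)) => Hl; last by move/eqP: Hrne.
  have Hcn : connect (eT T) u1 u2.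
    by move: (Hc u1); rewrite H1 /= => /forallP /(_ u2); rewrite H2.
  have := reach_bound (conj Hr Hinj) H1 E1 Hcn; lia.
have Hcn : connect (eT T) u2 u1.
  by move: (Hc u2); rewrite H2 /= => /forallP /(_ u1); rewrite H1.
have := reach_bound (conj Hr Hinj) H2 E2 Hcn; lia.
Qed.


Lemma phi_split (D C : {set 'I_n}) : C \subset D ->
  (forall a b, a \in C -> b \in D -> e a b -> b \in C) ->
  phi D = phi C + phi (D :\: C).
Proof.
move=> HCD Hcl; rewrite /phi -big_split /=; apply: eq_bigr => u _.
rewrite /insucc inE.
case HuC: (u \in C) => /=.
  have HuD : u \in D by move/subsetP: HCD; apply.
  rewrite HuD /=.
  case Hs: (succ u) => [v|] //.
  have Huv := succ_e Hs.
  case HvC: (v \in C) => /=; first by rewrite (subsetP HCD v HvC).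
  case HvD: (v \in D) => //. by rewrite (Hcl u v HuC HvD Huv) in HvC.
case HuD: (u \in D) => //=.
case Hs: (succ u) => [v|] //.
have Huv := succ_e Hs.
rewrite inE.
case HvC: (v \in C) => //=.
have := Hcl v u HvC HuD; rewrite e_sym Huv HuC => /(_ erefl) //.
Qed.

Lemma eT_sym D : symmetric (eT D).
Proof. move=> a b; rewrite /eT e_sym; case: (a \in D); case: (b \in D); by rewrite ?andbT ?andbF. Qed.

Definition comp (D : {set 'I_n}) x := [set y in D | connect (eT D) x y].

Lemma comp_closed D x a b : a \in comp D x -> b \in D -> e a b -> b \in comp D x.
Proof.
rewrite !inE => /andP [HaD Hxa] HbD Hab; rewrite HbD /=.
apply: connect_trans Hxa (connect1 _); by rewrite /eT Hab HaD HbD.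
Qed.

Lemma comp_sub D x : comp D x \subset D.
Proof. by apply/subsetP => y; rewrite inE => /andP []. Qed.

Lemma lift_conn D x a b : a \in comp D x -> connect (eT D) a b ->
  connect (fun a b => [&& e a b, a \in comp D x & b \in comp D x]) a b.
Proof.
move=> Ha /connectP [p Hp ->].
elim: p a Ha Hp => [|h p IH] a Ha //= /andP [Hah Hp].
have Hh : h \in comp D x.
  move: Hah; rewrite /eT => /and3P [E _ HhD]; exact: comp_closed Ha HhD E.
apply: connect_trans (connect1 _) (IH h Hh Hp).
move: Hah; rewrite /eT => /and3P [E _ _]; by rewrite E Ha Hh.
Qed.

Lemma comp_conn D x : induced_connected e (comp D x).
Proof.
apply/forall_inP => y Hy; apply/forall_inP => z Hz.
have Hy' := Hy; apply: lift_conn Hy' _.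
move: Hy Hz; rewrite !inE => /andP [_ Hy] /andP [_ Hz].
apply: connect_trans _ Hz; by rewrite (sym_connect_sym (@eT_sym D)).
Qed.

Lemma sd_self (I : {set 'I_n}) : sd I I = set0.
Proof. by apply/setP => z; rewrite in_sd inE; case: (z \in I). Qed.

Lemma sd_flipI (I C : {set 'I_n}) : sd I (sd I C) = C.
Proof. by apply/setP => z; rewrite !in_sd; case: (z \in I); case: (z \in C). Qed.

Lemma sd_flipJ (I J C : {set 'I_n}) : C \subset sd I J -> sd (sd I C) J = sd I J :\: C.
Proof.
move/subsetP => H; apply/setP => z; rewrite !in_sd inE in_sd.
case HzC: (z \in C); last by case: (z \in I); case: (z \in J).
by move: (H z HzC); rewrite in_sd; case: (z \in I); case: (z \in J).
Qed.

Lemma sd_trans (I J Z : {set 'I_n}) : sd I Z = sd (sd J Z) (sd I J).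
Proof. by apply/setP => z; rewrite !in_sd; case: (z \in I); case: (z \in J); case: (z \in Z). Qed.

Lemma indep_flip (I J C : {set 'I_n}) : independent e I -> independent e J ->
  C \subset sd I J -> (forall a b, a \in C -> b \in sd I J -> e a b -> b \in C) ->
  independent e (sd I C).
Proof.
move=> /forall_inP HI /forall_inP HJ /subsetP HC Hcl.
have HI' : forall a b, a \in I -> b \in I -> e a b -> False.
  move=> a b Ha Hb Hab; by move: (HI a Ha) => /forall_inP /(_ b Hb); rewrite Hab.
have HJ' : forall a b, a \in J -> b \in J -> e a b -> False.
  move=> a b Ha Hb Hab; by move: (HJ a Ha) => /forall_inP /(_ b Hb); rewrite Hab.
have key : forall a b, a \notin C -> a \in I -> b \in C -> b \notin I -> e a b -> False.
  move=> a b HaC HaI HbC HbI Hab.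
  have HbJ : b \in J by move: (HC b HbC); rewrite in_sd (negbTE HbI); case: (b \in J).
  case HaD: (a \in sd I J).
    by move: (Hcl b a HbC HaD); rewrite e_sym Hab (negbTE HaC) => /(_ erefl).
  have HaJ : a \in J by move: HaD; rewrite in_sd HaI; case: (a \in J).
  exact: HJ' HaJ HbJ Hab.
apply/forall_inP => x Hx; apply/forall_inP => y Hy; apply/negP => Hxy.
move: Hx Hy; rewrite !in_sd.
case HxC: (x \in C); case HyC: (y \in C); case HxI: (x \in I); case HyI: (y \in I) => //= _ _.
- have HxJ : x \in J by move: (HC x HxC); rewrite in_sd HxI; case: (x \in J).
  have HyJ : y \in J by move: (HC y HyC); rewrite in_sd HyI; case: (y \in J).
  exact: HJ' HxJ HyJ Hxy.
- by apply: (key y x); rewrite ?HyC ?HxC ?HxI ?HyI // e_sym.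
- by apply: (key x y); rewrite ?HyC ?HxC ?HxI ?HyI.
- exact: HI' HxI HyI Hxy.
Qed.

Lemma cc_step (D C : {set 'I_n}) : C \subset D -> C != set0 ->
  (forall a b, a \in C -> b \in D -> e a b -> b \in C) ->
  induced_connected e C -> cc D = (cc (D :\: C)).+1.
Proof.
move=> HCD HC0 Hcl Hconn.
have Hsplit := phi_split HCD Hcl.
have H1 := phi_conn Hconn.
have HD0 : D != set0.
  case/set0Pn: HC0 => x Hx; apply/set0Pn; exists x; exact: (subsetP HCD).
rewrite /cc (negbTE HD0).
case: ifP => [/eqP E|/negbT Hne].
  by move: Hsplit; rewrite E phi_set0; lia.
have P1 : 0 < phi C.
  apply: phi_pos => //; case/set0Pn: Hne => w; rewrite inE => /andP [Hw _]; by exists w.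
have P2 : 0 < phi (D :\: C).
  apply: phi_pos => //; case/set0Pn: HC0 => w Hw; exists w => //; by rewrite inE Hw.
lia.
Qed.

Lemma reconf_cons (I I' J : {set 'I_n}) L : independent e I -> is_adjacent e I I' ->
  reconf_seq e I' J L -> reconf_seq e I J (I' :: L).
Proof.
move=> HI Hadj /and3P [Hall Hp Hl]; rewrite /reconf_seq /= HI Hadj /=.
by rewrite -/(all (independent e) (I' :: L)) Hall Hp Hl.
Qed.

Lemma ub N : forall I J : {set 'I_n}, #|sd I J| <= N -> independent e I -> independent e J ->
  exists L, reconf_seq e I J L /\ size L = cc (sd I J).
Proof.
elim: N => [|N IH] I J HN HI HJ; case: (boolP (sd I J == set0)) => [H0|Hne].
- have -> : I = J.
    apply/setP => z; have := in_sd I J z; rewrite (eqP H0) inE.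
    by case: (z \in I); case: (z \in J).
  exists [::]; by rewrite /reconf_seq /= HJ eqxx /cc sd_self eqxx.
- by move: HN; rewrite leqn0 cards_eq0 (negbTE Hne).
- have -> : I = J.
    apply/setP => z; have := in_sd I J z; rewrite (eqP H0) inE.
    by case: (z \in I); case: (z \in J).
  exists [::]; by rewrite /reconf_seq /= HJ eqxx /cc sd_self eqxx.
case/set0Pn: Hne => x Hx.
set D := sd I J.
set C := comp D x.
have HxC : x \in C by rewrite inE Hx connect0.
have HCD : C \subset D := comp_sub D x.
have Hcl : forall a b, a \in C -> b \in D -> e a b -> b \in C := @comp_closed D x.
have HI' : independent e (sd I C) := indep_flip HI HJ HCD Hcl.
have Hcard : #|sd (sd I C) J| <= N.
  rewrite sd_flipJ // cardsDS //.
  have : 0 < #|C| by apply/card_gt0P; exists x.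
  move: HN; rewrite -/D; lia.
have [L [HL HsL]] := IH _ _ Hcard HI' HJ.
exists (sd I C :: L); split.
  apply: reconf_cons => //.
  rewrite /is_adjacent -/(sd I (sd I C)) sd_flipI; exact: comp_conn.
rewrite /= HsL sd_flipJ // (@cc_step D C) //.
- by apply/set0Pn; exists x.
- exact: comp_conn.
Qed.

Lemma lb_path L : forall I : {set 'I_n}, path (is_adjacent e) I L -> phi (sd I (last I L)) <= size L.
Proof.
elim: L => [|J L IH] I /=; first by rewrite sd_self phi_set0.
move=> /andP [HIJ HP].
rewrite (sd_trans I J (last J L)).
apply: (leq_trans (phi_sd _ _)); rewrite -addn1; apply: leq_add; first exact: IH.
exact: phi_conn HIJ.
Qed.

Lemma lb (I J : {set 'I_n}) L : reconf_seq e I J L -> cc (sd I J) <= size L.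
Proof.
case/and3P => _ Hp /eqP Hl.
have := lb_path Hp; rewrite Hl /cc.
case: ifP => // Hne.
case: L Hp Hl => [|J' L] /= Hp Hl.
  by rewrite -Hl sd_self eqxx in Hne.
by move=> H; rewrite geq_max H andbT.
Qed.

Lemma symisr_iff (Is It : {set 'I_n}) k : independent e Is -> independent e It ->
  (SymISR e Is It k <-> cc (sd Is It) <= k).
Proof.
move=> HI HJ; split.
  case=> L [HL Hk]; exact: leq_trans (lb HL) Hk.
move=> Hk; have [L [HL HsL]] := ub (leqnn _) HI HJ.
exists L; by rewrite HsL.
Qed.

Lemma sumb_count (T : Type) (s : seq T) (a : pred T) : \sum_(x <- s) (a x : nat) = count a s.
Proof. elim: s => [|x s IH]; by rewrite ?big_nil ?big_cons //= IH. Qed.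

Variable es : seq ('I_n * 'I_n).
Hypothesis Hes : edge_list e es.

Definition Mt u (p : 'I_n * 'I_n) := if succ u is Some v then (p == (u,v)) || (p == (v,u)) else false.

Lemma sumM p : e p.1 p.2 -> \sum_u (Mt u p : nat) = 1.
Proof.
case: p => a b /= Hab.
case: (e_succ Hab) => Hs.
  rewrite (bigD1 a) //= big1 /Mt ?Hs ?eqxx // => u Hua.
  case Hu: (succ u) => [v|] //=; rewrite !xpair_eqE.
  rewrite eq_sym (negbTE Hua) /=.
  case: eqP => // E1; case: eqP => // E2; subst.
  first [exact: (False_ind _ (succ_antisym Hs Hu)) | exact: (False_ind _ (succ_antisym Hu Hs))].
rewrite (bigD1 b) //= big1 /Mt ?Hs ?eqxx ?orbT // => u Hub.
case Hu: (succ u) => [v|] //=; rewrite !xpair_eqE.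
rewrite [b == u]eq_sym (negbTE Hub) andbF /= orbF.
case: eqP => // E1; case: eqP => // E2; subst.
first [exact: (False_ind _ (succ_antisym Hs Hu)) | exact: (False_ind _ (succ_antisym Hu Hs))].
Qed.

Lemma count_es (P : pred ('I_n * 'I_n)) : (forall a b, P (a,b) = P (b,a)) ->
  count P es = \sum_u ((if succ u is Some v then P (u,v) else false) : nat).
Proof.
move=> HP; have [Hall Hcnt] := Hes.
rewrite -sumb_count.
transitivity (\sum_(p <- es) \sum_u (Mt u p && P p : nat)).
  rewrite big_seq [RHS]big_seq; apply: eq_bigr => p Hp.
  have Hep : e p.1 p.2 := (allP Hall) p Hp.
  transitivity ((P p : nat) * \sum_u (Mt u p : nat)); first by rewrite sumM // muln1.
  rewrite big_distrr /=; apply: eq_bigr => u _; by case: (P p); case: (Mt u p).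
rewrite exchange_big /=; apply: eq_bigr => u _.
rewrite /Mt; case Hs: (succ u) => [v|]; last by rewrite big1.
transitivity (\sum_(p <- es) (P (u,v) : nat) * ((p == (u,v)) || (p == (v,u)) : nat)).
  apply: eq_bigr => p _; case: eqP => [->|_] /=; first by case: (P (u,v)).
  case: eqP => [->|_] /=; last by rewrite muln0.
  by rewrite -HP; case: (P (u,v)).
by rewrite -big_distrr /= sumb_count (Hcnt u v (succ_e Hs)) muln1.
Qed.

Lemma size_es : size es = \sum_u ((succ u != None) : nat).
Proof.
rewrite -count_predT count_es //; apply: eq_bigr => u _; by case: (succ u).
Qed.

Lemma m_le_n : size es <= n.
Proof.
rewrite size_es sumb_card; apply: leq_trans (max_card _) _; by rewrite card_ord.
Qed.

Lemma none_uniq u1 u2 : succ u1 = None -> succ u2 = None -> u1 = u2.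
Proof.
case Hc: cyc.
  by case: (succ_total Hc u1) => v ->.
have [g fK gK] := injF_bij Hf.
have Hlast : forall u, succ u = None -> (f u : nat) = n.-1.
  move=> u Hu; have := ltn_ord (f u).
  case: (ltnP (f u).+1 n) => Hlt; last by lia.
  have : succ u = Some (g (Ordinal Hlt)).
    by apply/eqP; rewrite succP gK /nx Hc.
  by rewrite Hu.
move=> H1 H2; apply: Hf; apply: val_inj => /=; by rewrite !Hlast.
Qed.

Lemma n_le_m1 : n <= (size es).+1.
Proof.
have E : n = \sum_u ((succ u != None) : nat) + \sum_u ((succ u == None) : nat).
  rewrite -big_split /=.
  transitivity (\sum_(u < n) 1); first by rewrite sum1_card card_ord.
  apply: eq_bigr => u _; by case: (succ u).
have H1 : \sum_u ((succ u == None) : nat) <= 1.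
  rewrite sumb_card; apply/card_le1P => x; rewrite unfold_in => /eqP Hx y.
  rewrite !unfold_in; apply/eqP/eqP => [Hy|->//]; exact: none_uniq Hy Hx.
rewrite size_es; lia.
Qed.

Lemma count_D (D : {set 'I_n}) :
  count (fun p => (p.1 \in D) && (p.2 \in D)) es = \sum_u ((u \in D) && insucc D u : nat).
Proof.
rewrite count_es; last by move=> a b /=; rewrite andbC.
apply: eq_bigr => u _; rewrite /insucc; case: (succ u) => [v|] //=; by rewrite andbF.
Qed.

Lemma phi_eq (D : {set 'I_n}) :
  phi D = \sum_u ((u \in D) : nat) - count (fun p => (p.1 \in D) && (p.2 \in D)) es.
Proof.
rewrite count_D (split_sum (fun u => u \in D) (insucc D)) /phi; lia.
Qed.

End Comb.
Definition prog : program := [::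
  Defs.Sub 1 0 1;
  Defs.Add 0 0 0;
  Defs.Add 0 0 1;
  Defs.Cst 1 12;
  Defs.Add 1 1 0;
  Defs.Add 1 1 0;
  Defs.StoreI 1 2;
  Defs.Cst 2 3;
  Defs.Add 2 1 2;
  Defs.StoreI 2 3;
  Defs.Cst 3 1;
  Defs.Add 2 2 3;
  Defs.StoreI 2 4;
  Defs.Add 2 2 3;
  Defs.StoreI 2 5;
  Defs.Add 2 2 3;
  Defs.StoreI 2 6;
  Defs.Add 2 2 3;
  Defs.StoreI 2 7;
  Defs.Add 2 2 3;
  Defs.StoreI 2 8;
  Defs.Add 2 2 3;
  Defs.StoreI 2 9;
  Defs.Add 2 2 3;
  Defs.StoreI 2 10;
  Defs.Add 2 2 3;
  Defs.StoreI 2 11;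
  Defs.Cst 4 12;
  Defs.Add 5 1 4;
  Defs.Sub 6 1 4;
  Defs.Jz 6 37;
  Defs.LoadI 7 4;
  Defs.StoreI 5 7;
  Defs.Add 4 4 3;
  Defs.Add 5 5 3;
  Defs.Sub 6 6 3;
  Defs.Jmp 30;
  Defs.Half 8 0;
  Defs.Add 9 8 8;
  Defs.Sub 9 0 9;
  Defs.Sub 9 8 9;
  Defs.Cst 11 3;
  Defs.Add 11 11 1;
  Defs.Add 10 9 9;
  Defs.Add 10 10 11;
  Defs.Cst 4 0;
  Defs.Add 4 4 10;
  Defs.Cst 6 0;
  Defs.Add 6 6 8;
  Defs.Cst 2 0;
  Defs.Jz 6 62;
  Defs.LoadI 5 4;
  Defs.Add 7 4 8;
  Defs.LoadI 7 7;
  Defs.Add 5 5 7;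
  Defs.Half 7 5;
  Defs.Sub 5 5 7;
  Defs.Sub 5 5 7;
  Defs.Add 2 2 5;
  Defs.Add 4 4 3;
  Defs.Sub 6 6 3;
  Defs.Jmp 50;
  Defs.Jz 2 99;
  Defs.Cst 6 0;
  Defs.Add 6 6 9;
  Defs.Jz 6 93;
  Defs.Cst 4 0;
  Defs.LoadI 5 11;
  Defs.Add 5 5 10;
  Defs.LoadI 7 5;
  Defs.Add 5 5 8;
  Defs.LoadI 5 5;
  Defs.Add 5 5 7;
  Defs.Half 7 5;
  Defs.Sub 5 5 7;
  Defs.Sub 5 5 7;
  Defs.Add 4 4 5;
  Defs.Add 11 11 3;
  Defs.LoadI 5 11;
  Defs.Add 5 5 10;
  Defs.LoadI 7 5;
  Defs.Add 5 5 8;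
  Defs.LoadI 5 5;
  Defs.Add 5 5 7;
  Defs.Half 7 5;
  Defs.Sub 5 5 7;
  Defs.Sub 5 5 7;
  Defs.Add 4 4 5;
  Defs.Add 11 11 3;
  Defs.Half 4 4;
  Defs.Sub 2 2 4;
  Defs.Sub 6 6 3;
  Defs.Jmp 65;
  Defs.LoadI 5 1;
  Defs.Jz 5 97;
  Defs.Sub 2 2 5;
  Defs.Jz 2 99;
  Defs.Cst 0 0;
  Defs.Halt;
  Defs.Cst 0 1;
  Defs.Halt].

Arguments exec : simpl never.
Arguments upd : simpl never.

Definition mk (r : seq nat) (H : nat -> nat) : nat -> nat :=
  fun a => if a < 12 then nth 0 r a else H a.
Arguments mk : simpl never.

Lemma mk_lo r H a : a < 12 -> mk r H a = nth 0 r a.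
Proof. by rewrite /mk => ->. Qed.
Lemma mk_hi r H a : 12 <= a -> mk r H a = H a.
Proof. move=> Ha; rewrite /mk; case: ifP => // Hlt; lia. Qed.
Lemma upd_lo r H d v : d < 12 -> upd (mk r H) d v = mk (set_nth 0 r d v) H.
Proof.
move=> Hd; apply: functional_extensionality => a; rewrite /upd /mk nth_set_nth /=.
case: eqP => [->|_]; by rewrite ?Hd.
Qed.
Lemma upd_hi r H d v : 12 <= d -> upd (mk r H) d v = mk r (upd H d v).
Proof.
move=> Hd; apply: functional_extensionality => a; rewrite /upd /mk.
case: eqP => [->|_] //; by rewrite ltnNge Hd.
Qed.
Lemma upd_same H d v : upd H d v d = v.
Proof. by rewrite /upd eqxx. Qed.
Lemma upd_other H d v a : a != d -> upd H d v a = H a.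
Proof. by rewrite /upd => /negbTE ->. Qed.

Lemma exec_S P t c : exec P t.+1 c = exec P t (step P c).
Proof. by rewrite /exec iterSr. Qed.
Lemma exec_0 P c : exec P 0 c = c.
Proof. by []. Qed.
Lemma exec_add P a b c : exec P (a + b) c = exec P b (exec P a c).
Proof. by rewrite /exec addnC iterD. Qed.
Lemma exec_halted P t c : halted P c -> exec P t c = c.
Proof.
move=> H; elim: t => // t IH; rewrite exec_S.
move: H; rewrite /halted /step; case: (nth Halt P (pc c)) => //; by case: c IH.
Qed.

Ltac rdmem := repeat first [progress (rewrite /=) | match goal with
  | |- context [upd (mk ?r ?H) ?d ?v] => rewrite (@upd_lo r H d v); last by []
  | |- context [upd (mk ?r ?H) ?d ?v] => rewrite (@upd_hi r H d v); last by lia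
  | |- context [mk ?r ?H ?a] => rewrite (@mk_lo r H a); last by []
  | |- context [mk ?r ?H ?a] => rewrite (@mk_hi r H a); last by lia
  end].


Section Prog.
Variables (m0 : nat -> nat) (n m k : nat).
Hypothesis H0 : m0 0 = n.
Hypothesis H1 : m0 1 = m.
Hypothesis H2 : m0 2 = k.
Hypothesis Hmn : m <= n.
Hypothesis Hnm : n <= m.+1.

Definition b := n - m.
Definition PP := n + n + b.
Definition X := 12 + PP + PP.
Ltac stp := rewrite exec_S /step /=; rdmem; rewrite /=; try rewrite -/b; try rewrite -/PP; try rewrite -/X.

Lemma mk_m0 : m0 = mk [:: m0 0; m0 1; m0 2; m0 3; m0 4; m0 5; m0 6; m0 7; m0 8; m0 9; m0 10; m0 11] m0.
Proof.
apply: functional_extensionality => a; rewrite /mk; case Ha: (a < 12); last by [].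
do 12! [case: a Ha => [|a] Ha; first by []].
by [].
Qed.

Definition H0m := let H := upd m0 X k in
  let H := upd H (X + 3) (m0 3) in
  let H := upd H (X + 3 + 1) (m0 4) in
  let H := upd H (X + 3 + 1 + 1) (m0 5) in
  let H := upd H (X + 3 + 1 + 1 + 1) (m0 6) in
  let H := upd H (X + 3 + 1 + 1 + 1 + 1) (m0 7) in
  let H := upd H (X + 3 + 1 + 1 + 1 + 1 + 1) (m0 8) in
  let H := upd H (X + 3 + 1 + 1 + 1 + 1 + 1 + 1) (m0 9) in
  let H := upd H (X + 3 + 1 + 1 + 1 + 1 + 1 + 1 + 1) (m0 10) in
  upd H (X + 3 + 1 + 1 + 1 + 1 + 1 + 1 + 1 + 1) (m0 11).

Lemma seg0 t : exec prog (30 + t) (Config 0 m0) =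
  exec prog t (Config 30 (mk [:: PP; X; X + 3 + 1 + 1 + 1 + 1 + 1 + 1 + 1 + 1; 1; 12; X + 12; X - 12;
     m0 7; m0 8; m0 9; m0 10; m0 11] H0m)).
Proof.
have HX : 12 <= X by rewrite /X; lia.
rewrite exec_add {1}mk_m0 H0 H1.
do 6 stp. rewrite H2.
do 24 stp.
by [].
Qed.
Lemma XP : X = 12 + PP + PP. Proof. by []. Qed.

Lemma H0m_lo a : 12 <= a < X -> H0m a = m0 a.
Proof. move=> Ha; rewrite /H0m /upd; repeat (case: eqP => ?); lia. Qed.
Lemma H0m_X : H0m X = k.
Proof. rewrite /H0m /upd; repeat (case: eqP => ?); lia. Qed.
Lemma H0m_hi a : 3 <= a < 12 -> H0m (X + a) = m0 a.
Proof.
move=> Ha.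
do 3 (case: a Ha => [|a] Ha; first by []).
do 9 (case: a Ha => [|a] Ha; first by rewrite /H0m /upd; repeat (case: eqP => ?); try lia).
by [].
Qed.

Lemma copy_loop cnt : forall j r2 r7 H, cnt + j = X - 12 ->
  (forall a, 12 <= a < X -> H a = m0 a) -> H X = k ->
  (forall a, 3 <= a < 12 + j -> H (X + a) = m0 a) ->
  exists r7' H', (forall t, exec prog (7 * cnt + 1 + t)
     (Config 30 (mk [:: PP; X; r2; 1; 12 + j; X + 12 + j; cnt; r7; m0 8; m0 9; m0 10; m0 11] H)) =
     exec prog t (Config 37 (mk [:: PP; X; r2; 1; 12 + j + cnt; X + 12 + j + cnt; 0; r7'; m0 8; m0 9; m0 10; m0 11] H')))
   /\ H' X = k /\ (forall a, 3 <= a < X -> H' (X + a) = m0 a).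
Proof.
have HX : 12 <= X by rewrite /X; lia.
elim: cnt => [|c IH] j r2 r7 H Hc Hlo HX' Hhi.
  exists r7, H; split; last first.
    split => // a Ha; apply: Hhi; lia.
  move=> t; rewrite !addn0 muln0 add0n.
  stp. by [].
have Hj : 12 + j < X by lia.
have [r7' [H' [Hrun [HH1 HH2]]]] := IH (j.+1) r2 (H (12 + j)) (upd H (X + 12 + j) (H (12 + j))) ltac:(lia)
  ltac:(move=> a Ha; rewrite upd_other; [exact: Hlo | apply/eqP; lia])
  ltac:(rewrite upd_other; [exact: HX' | apply/eqP; lia])
  ltac:(move=> a Ha; case: (eqVneq a (12 + j)) => [->|Hne];
         [by rewrite addnA upd_same Hlo; lia | rewrite upd_other; [apply: Hhi; lia | apply/eqP; lia]]).
exists r7', H'; split => //.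
move=> t.
rewrite (_ : 7 * c.+1 + 1 + t = 7 + (7 * c + 1 + t)); last by lia.
rewrite exec_add.
do 7 stp.
have E1 : 12 + j + 1 = 12 + j.+1 by lia.
have E2 : X + 12 + j + 1 = X + 12 + j.+1 by lia.
have E3 : c.+1 - 1 = c by lia.
have E4 : 12 + j + c.+1 = 12 + j.+1 + c by lia.
have E5 : X + 12 + j + c.+1 = X + 12 + j.+1 + c by lia.
rewrite exec_0 E1 E2 E3 E4 E5; exact: Hrun.
Qed.
Definition EB := X + 3.
Definition IB := EB + m + m.
Definition xorn (a c : nat) := a + c - (a + c)./2 - (a + c)./2.
Definition xv (i : nat) := xorn (m0 (3 + m + m + i)) (m0 (3 + m + m + n + i)).
Definition Hdata (H : nat -> nat) := forall a, 3 <= a < X -> H (X + a) = m0 a.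

Lemma PPdef : PP = n + n + (n - m). Proof. by []. Qed.
Lemma PPhalf : PP./2 = n.
Proof.
have Hb : n - m <= 1 by lia.
rewrite PPdef; case: (n - m) Hb => [|[|//]] _.
  by rewrite addn0 addnn doubleK.
have -> : n + n + 1 = true + n.*2 by rewrite -addnn /=; lia.
exact: half_bit_double.
Qed.

Lemma Xtop : 3 + m + m + n + n <= X.
Proof. rewrite XP PPdef; lia. Qed.

Lemma seg1 z2 z4 z5 z6 z7 z8 z9 z10 z11 H t :
  exec prog (13 + t) (Config 37 (mk [:: PP; X; z2; 1; z4; z5; z6; z7; z8; z9; z10; z11] H)) =
  exec prog t (Config 50 (mk [:: PP; X; 0; 1; IB; z5; n; z7; n; m; IB; EB] H)).
Proof.
have HX : 12 <= X by rewrite /X; lia.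
rewrite exec_add.
do 13 stp.
rewrite exec_0 PPhalf.
have E1 : n - (PP - (n + n)) = m by rewrite PPdef; lia.
rewrite E1.
have E2 : 0 + (m + m + (3 + X)) = IB by rewrite /IB /EB; lia.
have E3 : m + m + (3 + X) = IB by rewrite /IB /EB; lia.
have E4 : 3 + X = EB by rewrite /EB; lia.
by rewrite E2 E3 E4 add0n.
Qed.

Lemma xv_step H j : Hdata H -> j < n ->
  let s := H (IB + j) + H (IB + j + n) in s - s./2 - s./2 = xv j.
Proof.
move=> Hd Hj /=.
have Xt := Xtop.
rewrite (_ : IB + j = X + (3 + m + m + j)); last by rewrite /IB /EB; lia.
rewrite (_ : X + (3 + m + m + j) + n = X + (3 + m + m + n + j)); last by lia.
rewrite !Hd //; lia.
Qed.

Lemma vloop c : forall j acc z5 z7 H, c + j = n -> Hdata H -> acc = \sum_(i < j) xv i ->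
  exists z5' z7', forall t, exec prog (12 * c + 1 + t)
    (Config 50 (mk [:: PP; X; acc; 1; IB + j; z5; c; z7; n; m; IB; EB] H)) =
  exec prog t (Config 62 (mk [:: PP; X; \sum_(i < n) xv i; 1; IB + n; z5'; 0; z7'; n; m; IB; EB] H)).
Proof.
have HX : 12 <= X by rewrite /X; lia.
have HIB : X <= IB by rewrite /IB /EB; lia.
elim: c => [|c IH] j acc z5 z7 H Hc Hd Hacc.
  exists z5, z7 => t; rewrite muln0 add0n.
  stp. rewrite -Hc add0n Hacc. by [].
have Hj : j < n by lia.
set s := H (IB + j) + H (IB + j + n).
have [z5' [z7' Hrun]] := IH j.+1 (acc + (s - s./2 - s./2)) (s - s./2 - s./2) (s./2) H ltac:(lia) Hd
  ltac:(by rewrite big_ord_recr /= Hacc (xv_step Hd Hj)).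
exists z5', z7' => t.
rewrite (_ : 12 * c.+1 + 1 + t = 12 + (12 * c + 1 + t)); last by lia.
rewrite exec_add.
do 12 stp.
rewrite exec_0.
have E1 : IB + j + 1 = IB + j.+1 by lia.
have E3 : c.+1 - 1 = c by lia.
rewrite E1 E3. exact: Hrun.
Qed.
Hypothesis Hedges : forall i, i < m -> m0 (3 + i + i) < n /\ m0 (4 + i + i) < n.
Definition ev (i : nat) := (xv (m0 (3 + i + i)) + xv (m0 (4 + i + i)))./2.

Definition dd (H : nat -> nat) u := let s := H (u + IB + n) + H (u + IB) in s - s./2 - s./2.

Lemma xv_step2 H u : Hdata H -> u < n -> dd H u = xv u.
Proof.
move=> Hd Hj; rewrite /dd.
have Xt := Xtop.
rewrite (_ : u + IB = X + (3 + m + m + u)); last by rewrite /IB /EB; lia.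
rewrite (_ : X + (3 + m + m + u) + n = X + (3 + m + m + n + u)); last by lia.
rewrite !Hd; try lia. by rewrite /xv /xorn addnC.
Qed.


Lemma ebody acc c i z4 z5 z7 H t :
  exec prog (28 + t) (Config 65 (mk [:: PP; X; acc; 1; z4; z5; c.+1; z7; n; m; IB; EB + i + i] H)) =
  exec prog t (Config 65 (mk [:: PP; X; acc - (0 + dd H (H (EB + i + i)) + dd H (H (EB + i + i + 1)))./2; 1;
     (0 + dd H (H (EB + i + i)) + dd H (H (EB + i + i + 1)))./2; dd H (H (EB + i + i + 1)); c;
     (H (H (EB + i + i + 1) + IB + n) + H (H (EB + i + i + 1) + IB))./2; n; m; IB; EB + i.+1 + i.+1] H)).
Proof.
have HX : 12 <= X by rewrite /X; lia.
have HIB : 12 <= IB by rewrite /IB /EB; lia.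
have HEB : 12 <= EB by rewrite /EB; lia.
rewrite exec_add.
do 28 stp.
rewrite exec_0 subn1 /=.
have E1 : EB + i + i + 1 + 1 = EB + i.+1 + i.+1 by lia.
by rewrite E1.
Qed.

Lemma eloop c : forall i acc z4 z5 z7 H, c + i = m -> Hdata H ->
  acc = \sum_(j < n) xv j - \sum_(j < i) ev j ->
  exists z4' z5' z7', forall t, exec prog (28 * c + 1 + t)
    (Config 65 (mk [:: PP; X; acc; 1; z4; z5; c; z7; n; m; IB; EB + i + i] H)) =
  exec prog t (Config 93 (mk [:: PP; X; \sum_(j < n) xv j - \sum_(j < m) ev j; 1; z4'; z5'; 0; z7'; n; m; IB; EB + m + m] H)).
Proof.
have HX : 12 <= X by rewrite /X; lia.
have HIB : X <= IB by rewrite /IB /EB; lia.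
have Xt := Xtop.
elim: c => [|c IH] i acc z4 z5 z7 H Hc Hd Hacc.
  exists z4, z5, z7 => t; rewrite muln0 add0n.
  stp. by rewrite -Hc add0n Hacc.
have Hi : i < m by lia.
have [Hu1 Hu2] := Hedges Hi.
have Ea : H (EB + i + i) = m0 (3 + i + i).
  rewrite (_ : EB + i + i = X + (3 + i + i)); last by rewrite /EB; lia.
  apply: Hd; lia.
have Eb : H (EB + i + i + 1) = m0 (4 + i + i).
  rewrite (_ : EB + i + i + 1 = X + (4 + i + i)); last by rewrite /EB; lia.
  apply: Hd; lia.
have [z4' [z5' [z7' Hrun]]] := IH i.+1 (acc - ev i) (ev i) (xv (m0 (4 + i + i)))
  ((H (m0 (4 + i + i) + IB + n) + H (m0 (4 + i + i) + IB))./2) H ltac:(lia) Hd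
  ltac:(by rewrite big_ord_recr /= Hacc subnDA).
exists z4', z5', z7' => t.
rewrite (_ : 28 * c.+1 + 1 + t = 28 + (28 * c + 1 + t)); last by lia.
rewrite ebody Ea Eb !(xv_step2 Hd Hu1) !(xv_step2 Hd Hu2).
exact: Hrun.
Qed.
Definition ends (c : config) (T : nat) (ans : bool) :=
  halted prog (exec prog T c) /\ ((Defs.mem (exec prog T c) 0 != 0) = ans).

Lemma ends_seq s c c' T ans : (forall t, exec prog (s + t) c = exec prog t c') ->
  ends c' T ans -> ends c (s + T) ans.
Proof. by move=> H; rewrite /ends H. Qed.

Lemma fin acc z4 z5 z6 z7 z11 H : H X = k ->
  exists2 T, T <= 5 & ends (Config 93 (mk [:: PP; X; acc; 1; z4; z5; z6; z7; n; m; IB; z11] H)) T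
     ((k != 0) && (acc - k == 0)).
Proof.
have HX : 12 <= X by rewrite /X; lia.
move=> HXk.
case Hk: k => [|k'].
  exists 3 => //; rewrite /ends.
  have -> : exec prog 3 (Config 93 (mk [:: PP; X; acc; 1; z4; z5; z6; z7; n; m; IB; z11] H)) =
     Config 98 (mk [:: 0; X; acc; 1; z4; 0; z6; z7; n; m; IB; z11] H).
    stp; rewrite HXk Hk; do 2 stp; by [].
  by [].
case E: (acc - k'.+1 == 0).
  exists 5 => //; rewrite /ends.
  have -> : exec prog 5 (Config 93 (mk [:: PP; X; acc; 1; z4; z5; z6; z7; n; m; IB; z11] H)) =
     Config 100 (mk [:: 1; X; acc - k'.+1; 1; z4; k'.+1; z6; z7; n; m; IB; z11] H).
    stp; rewrite HXk Hk; do 3 stp; rewrite E; stp; by [].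
  by [].
exists 5 => //; rewrite /ends.
have -> : exec prog 5 (Config 93 (mk [:: PP; X; acc; 1; z4; z5; z6; z7; n; m; IB; z11] H)) =
   Config 98 (mk [:: 0; X; acc - k'.+1; 1; z4; k'.+1; z6; z7; n; m; IB; z11] H).
  stp; rewrite HXk Hk; do 3 stp; rewrite E; stp; by [].
by [].
Qed.
Lemma seg62_zero A a4 a5 a6 a7 H : A = 0 ->
  ends (Config 62 (mk [:: PP; X; A; 1; a4; a5; a6; a7; n; m; IB; EB] H)) 2 true.
Proof.
move=> ->; rewrite /ends.
have -> : exec prog 2 (Config 62 (mk [:: PP; X; 0; 1; a4; a5; a6; a7; n; m; IB; EB] H)) =
   Config 100 (mk [:: 1; X; 0; 1; a4; a5; a6; a7; n; m; IB; EB] H).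
  do 2 stp; by [].
by [].
Qed.

Lemma seg62_nz A a4 a5 a6 a7 H t : A != 0 ->
  exec prog (3 + t) (Config 62 (mk [:: PP; X; A; 1; a4; a5; a6; a7; n; m; IB; EB] H)) =
  exec prog t (Config 65 (mk [:: PP; X; A; 1; a4; a5; m; a7; n; m; IB; EB] H)).
Proof.
move=> HA; rewrite exec_add.
stp; rewrite (negbTE HA); do 2 stp; by [].
Qed.

Definition AA := \sum_(j < n) xv j.
Definition BB := \sum_(j < m) ev j.

Lemma prog_main : exists2 T, T <= 100 * n.+1 &
  ends (Config 0 m0) T ((AA == 0) || ((k != 0) && (AA - BB - k == 0))).
Proof.
have HX : 12 <= X by rewrite /X; lia.
have [r7' [H' [Hcopy [HH'X HH'd]]]] := @copy_loop (X - 12) 0 (X + 3 + 1 + 1 + 1 + 1 + 1 + 1 + 1 + 1) (m0 7) H0m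
   ltac:(lia) H0m_lo H0m_X ltac:(move=> a Ha; apply: H0m_hi; lia).
rewrite !addn0 in Hcopy.
have [z5' [z7' Hv]] := @vloop n 0 0 (X + 12 + (X - 12)) r7' H' ltac:(lia) HH'd ltac:(by rewrite big_ord0).
rewrite !addn0 in Hv.
have Hbnd : X - 12 <= 4 * n + 2 by rewrite XP PPdef; lia.
case: (eqVneq AA 0) => HA.
  exists (30 + (7 * (X - 12) + 1 + (13 + (12 * n + 1 + 2)))); first by lia.
  rewrite HA /=.
  apply: (ends_seq seg0).
  apply: (ends_seq Hcopy).
  apply: (ends_seq (seg1 _ _ _ _ _ _ _ _ _ _)).
  apply: (ends_seq Hv).
  exact: seg62_zero.
have [z4'' [z5'' [z7'' He]]] := @eloop m 0 AA (IB + n) z5' z7' H' ltac:(lia) HH'd ltac:(by rewrite big_ord0 subn0).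
rewrite !addn0 in He.
have [Tf HTf Hf] := @fin (AA - BB) z4'' z5'' 0 z7'' (EB + m + m) H' HH'X.
exists (30 + (7 * (X - 12) + 1 + (13 + (12 * n + 1 + (3 + (28 * m + 1 + Tf)))))); first by lia.
rewrite /=.
apply: (ends_seq seg0).
apply: (ends_seq Hcopy).
apply: (ends_seq (seg1 _ _ _ _ _ _ _ _ _ _)).
apply: (ends_seq Hv).
apply: (ends_seq (fun t => seg62_nz _ _ _ _ _ t HA)).
apply: (ends_seq He).
exact: Hf.
Qed.
End Prog.

Lemma size_FL (T : Type) (s : seq T) (g1 g2 : T -> nat) :
  size (flatten [seq [:: g1 p; g2 p] | p <- s]) = size s + size s.
Proof. elim: s => //= x s IH; rewrite IH; lia. Qed.

Lemma nth_FL (T : Type) (s : seq T) (g1 g2 : T -> nat) p0 i : i < size s ->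
  nth 0 (flatten [seq [:: g1 p; g2 p] | p <- s]) (i + i) = g1 (nth p0 s i) /\
  nth 0 (flatten [seq [:: g1 p; g2 p] | p <- s]) (i + i).+1 = g2 (nth p0 s i).
Proof.
elim: s i => [|x s IH] [|i] Hi //=.
rewrite addnS /=; exact: IH.
Qed.

Lemma nth3 (a b c : nat) s x : nth 0 ([:: a; b; c] ++ s) (3 + x) = nth 0 s x.
Proof. by []. Qed.

Section Enc.
Variables (n : nat) (es : seq ('I_n * 'I_n)) (Is It : {set 'I_n}) (k : nat).

Lemma enc_edge p0 i : i < size es ->
  encode es Is It k (3 + i + i) = val (nth p0 es i).1 /\
  encode es Is It k (4 + i + i) = val (nth p0 es i).2.
Proof.
move=> Hi; rewrite /encode.
have [E1 E2] := nth_FL (fun p : 'I_n * 'I_n => val p.1) (fun p => val p.2) p0 Hi.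
rewrite (_ : 3 + i + i = 3 + (i + i)); last by lia.
rewrite (_ : 4 + i + i = 3 + (i + i).+1); last by lia.
rewrite !nth3 !nth_cat size_FL.
rewrite (_ : i + i < size es + size es); last by lia.
rewrite (_ : (i + i).+1 < size es + size es); last by lia.
by [].
Qed.

Lemma nth_layout (a b c : nat) (F I J : seq nat) (v : nat) : v < size I ->
  nth 0 ([:: a; b; c] ++ F ++ I ++ J) (3 + size F + v) = nth 0 I v /\
  nth 0 ([:: a; b; c] ++ F ++ I ++ J) (3 + size F + size I + v) = nth 0 J v.
Proof.
move=> Hv; split.
  rewrite -addnA nth3 nth_cat.
  have -> : (size F + v < size F) = false by lia.
  have -> : size F + v - size F = v by lia.
  by rewrite nth_cat Hv.
rewrite -!addnA nth3 nth_cat.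
have -> : (size F + (size I + v) < size F) = false by lia.
have -> : size F + (size I + v) - size F = size I + v by lia.
rewrite nth_cat.
have -> : (size I + v < size I) = false by lia.
by have -> : size I + v - size I = v by lia.
Qed.

Lemma enc_bits (v : 'I_n) :
  encode es Is It k (3 + size es + size es + v) = (v \in Is) /\
  encode es Is It k (3 + size es + size es + n + v) = (v \in It).
Proof.
have HIL : nth 0 [seq nat_of_bool (u \in Is) | u <- enum 'I_n] v = (v \in Is).
  by rewrite (nth_map v) ?size_enum_ord ?nth_ord_enum.
have HJL : nth 0 [seq nat_of_bool (u \in It) | u <- enum 'I_n] v = (v \in It).
  by rewrite (nth_map v) ?size_enum_ord ?nth_ord_enum.
have Hsz : size [seq nat_of_bool (u \in Is) | u <- enum 'I_n] = n.
  by rewrite size_map size_enum_ord.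
have HF := size_FL es (fun p : 'I_n * 'I_n => val p.1) (fun p => val p.2).
have [E1 E2] := @nth_layout n (size es) k (flatten [seq [:: val p.1; val p.2] | p <- es])
  [seq nat_of_bool (u \in Is) | u <- enum 'I_n] [seq nat_of_bool (u \in It) | u <- enum 'I_n]
  v ltac:(by rewrite Hsz).
rewrite HF Hsz HIL HJL in E1 E2.
split.
  rewrite (_ : 3 + size es + size es + v = 3 + (size es + size es) + v); last by lia.
  exact: E1.
rewrite (_ : 3 + size es + size es + n + v = 3 + (size es + size es) + n + v); last by lia.
exact: E2.
Qed.
End Enc.

Lemma xornE (a c : bool) : xorn a c = (a != c).
Proof. by case: a; case: c. Qed.

Lemma half_and (a c : bool) : (a + c)./2 = (a && c).
Proof. by case: a; case: c. Qed.

Lemma core n (e : rel 'I_n) es Is It k (f : 'I_n -> 'I_n) cyc :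
  injective f -> (forall u v, e u v = (nx n cyc (f u) == f v) || (nx n cyc (f v) == f u)) ->
  (cyc -> 3 <= n) -> edge_list e es -> independent e Is -> independent e It ->
  decides_within prog (encode es Is It k) (100 * n.+1) (SymISR e Is It k).
Proof.
move=> Hf He Hn3 Hes HI HJ.
set m0 := encode es Is It k.
have Hmn := m_le_n Hf He Hn3 Hes.
have Hnm := n_le_m1 Hf He Hn3 Hes.
have Hedges : forall i, i < size es -> m0 (3 + i + i) < n /\ m0 (4 + i + i) < n.
  move=> i Hi.
  have [p0 _] : exists p : 'I_n * 'I_n, True by case: (es) Hi => [//|p s] _; exists p.
  have [E1 E2] := enc_edge Is It k p0 Hi.
  by rewrite /m0 E1 E2 !ltn_ord.
have [T HT [Hhalt Hans]] := @prog_main m0 n (size es) k erefl erefl erefl Hmn Hnm Hedges.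
rewrite /decides_within.
have E : exec prog (100 * n.+1) (Config 0 m0) = exec prog T (Config 0 m0).
  by rewrite -(subnK HT) addnC exec_add exec_halted.
rewrite E; split => //.
rewrite Hans (symisr_iff Hf He Hn3 k HI HJ).
set D := sd Is It.
have HA : AA m0 n (size es) = \sum_u ((u \in D) : nat).
  apply: eq_bigr => j _; rewrite /xv.
  have [E1 E2] := enc_bits es Is It k j.
  by rewrite /m0 E1 E2 xornE in_sd.
have HB : BB m0 n (size es) = count (fun p => (p.1 \in D) && (p.2 \in D)) es.
  case Hes0: es => [|p0 es'].
    by rewrite /BB big_ord0.
  rewrite -Hes0 -sumb_count (big_nth p0) big_mkord /BB.
  apply: eq_bigr => i _.
  have [E1 E2] := enc_edge Is It k p0 (ltn_ord i).
  rewrite /ev /m0 E1 E2.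
  have [F1 _] := enc_bits es Is It k (nth p0 es i).1.
  have [_ F2] := enc_bits es Is It k (nth p0 es i).1.
  have [G1 _] := enc_bits es Is It k (nth p0 es i).2.
  have [_ G2] := enc_bits es Is It k (nth p0 es i).2.
  by rewrite /xv F1 F2 G1 G2 !xornE -!in_sd half_and.
have Hphi := phi_eq Hf He Hn3 Hes D.
have HAD : (AA m0 n (size es) == 0) = (D == set0).
  rewrite HA sumb_card -cards_eq0.
  by rewrite (eq_card (B := D)).
rewrite HAD /cc.
case: ifP => // _ /=.
rewrite geq_max Hphi -HA -HB subn_eq0 lt0n.
by [].
Qed.

Theorem corollary30 :
  exists (P : program) (C : nat),
    forall (n : nat) (e : rel 'I_n) (es : seq ('I_n * 'I_n))
           (Is It : {set 'I_n}) (k : nat),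
      (is_path_graph e \/ is_cycle_graph e) ->
      edge_list e es ->
      independent e Is -> independent e It ->
      decides_within P (encode es Is It k) (C * n.+1)
                     (SymISR e Is It k).
Proof.
exists prog, 100 => n e es Is It k [[f [Hf Hfe]] | [H3 [f [Hf Hfe]]]] Hes HI HJ.
  by apply: (@core n e es Is It k f false Hf).
by apply: (@core n e es Is It k f true Hf).
Qed.
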